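(* Let $(H,B_1,B_2)$ be a Rota-Baxter system of Hopf algebras with descendent operation $\circ$ and cocycle $\sigma$, and let $H_1=\operatorname{Im}(\sigma)$. Define $T:H_1\to H_1$ by $T(a)=S(B_1(a_1))B_2(a_2)$ for $a\in H_1$. Then $H_{B_1,B_2}=(H_1,\circ_1,1,\Delta_1,\epsilon_1,T)$ is a cocommutative Hopf algebra, where $\circ_1,\Delta_1,\epsilon_1$ denote the restrictions of $\circ,\Delta,\epsilon$ to $H_1$.
   Context: $\mathbb{F}$ is a field of characteristic $0$; all vector spaces, algebras, coalgebras, Hopf algebras are over $\mathbb{F}$. Sweedler notation $\Delta(a)=a_1\otimes a_2$ (iterated: $a_1\otimes a_2\otimes a_3$, etc.) is used. A coalgebra homomorphism $f$ satisfies $\Delta(f(a))=f(a_1)\otimes f(a_2)$ and $\epsilon(f(a))=\epsilon(a)$. A Rota-Baxter system of Hopf algebras is a triple $(H,B_1,B_2)$ where $(H,\cdot,1,\Delta,\epsilon,S)$ is a cocommutative Hopf algebra and $B_1,B_2:H\to H$ are coalgebra homomorphisms with $B_1(1)=B_2(1)=1$ such that for all $a,b\in H$: $B_1(a)B_1(b)=B_1(B_1(a_1)\,b\,S(B_2(a_2)))$ and $B_2(a)B_2(b)=B_2(B_1(a_1)\,b\,S(B_2(a_2)))$. Its descendent operation is $a\circ b=B_1(a_1)\,b\,S(B_2(a_2))$ and its cocycle is $\sigma(a)=B_1(a_1)S(B_2(a_2))$, $a,b\in H$. *)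

(* Defs.v *)
From HB Require Import structures.
From mathcomp Require Import all_boot all_order all_algebra.
Set Implicit Arguments. Unset Strict Implicit. Unset Printing Implicit Defensive.
Import Order.TTheory GRing.Theory Num.Theory.
Local Open Scope ring_scope.

(* Tensors in H (x) H are represented by finite lists of pairs (finite sums of
   pure tensors); equality of tensors is tested against all bilinear
   (resp. trilinear) forms with values in F, which characterizes equality in
   H (x) H over a field. *)

Section Hopf.
Variables (F : fieldType) (H : lmodType F).

Definition bilinear_form (phi : H -> H -> F) : Prop :=
  (forall k x x' y, phi (k *: x + x') y = k * phi x y + phi x' y) /\
  (forall k x y y', phi x (k *: y + y') = k * phi x y + phi x y').

Definition trilinear_form (psi : H -> H -> H -> F) : Prop :=
  (forall k x x' y z, psi (k *: x + x') y z = k * psi x y z + psi x' y z) /\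
  (forall k x y y' z, psi x (k *: y + y') z = k * psi x y z + psi x y' z) /\
  (forall k x y z z', psi x y (k *: z + z') = k * psi x y z + psi x y z').

Definition teq2 (s t : seq (H * H)) : Prop :=
  forall phi, bilinear_form phi ->
    \sum_(p <- s) phi p.1 p.2 = \sum_(p <- t) phi p.1 p.2.

(* t is a representation of the tensor Delta a by pure tensors of elements of A,
   i.e. a witness that Delta a lies in A (x) A. *)
Definition Arep (A : H -> Prop) (Delta : H -> seq (H * H)) (a : H)
    (t : seq (H * H)) : Prop :=
  (forall p, p \in t -> A p.1 /\ A p.2) /\ teq2 t (Delta a).

Definition linear_map (f : H -> H) : Prop :=
  forall k x y, f (k *: x + y) = k *: f x + f y.

Definition hopf_on (A : H -> Prop) (m : H -> H -> H) (u : H)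
    (Delta : H -> seq (H * H)) (e : H -> F) (s : H -> H) : Prop :=
  [/\ A 0, (forall k x y, A x -> A y -> A (k *: x + y)),
      A u, (forall a b, A a -> A b -> A (m a b)) &
      (forall a, A a -> A (s a))] /\
  (forall a, A a -> exists t, Arep A Delta a t) /\
  [/\ (forall k a a' b, A a -> A a' -> A b ->
          m (k *: a + a') b = k *: m a b + m a' b),
      (forall k a b b', A a -> A b -> A b' ->
          m a (k *: b + b') = k *: m a b + m a b'),
      (forall a b c, A a -> A b -> A c -> m (m a b) c = m a (m b c)) &
      (forall a, A a -> m u a = a /\ m a u = a)] /\
  [/\ (forall k a b, A a -> A b ->
          teq2 (Delta (k *: a + b)) ([seq (k *: p.1, p.2) | p <- Delta a] ++ Delta b)),
      (forall k a b, A a -> A b -> e (k *: a + b) = k * e a + e b),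
      (forall a t, A a -> Arep A Delta a t ->
         forall psi, trilinear_form psi ->
           \sum_(p <- t) \sum_(q <- Delta p.1) psi q.1 q.2 p.2 =
           \sum_(p <- t) \sum_(q <- Delta p.2) psi p.1 q.1 q.2) &
      (forall a t, A a -> Arep A Delta a t ->
         \sum_(p <- t) e p.1 *: p.2 = a /\ \sum_(p <- t) e p.2 *: p.1 = a)] /\
  [/\ (forall a b ta tb, A a -> A b -> Arep A Delta a ta -> Arep A Delta b tb ->
          teq2 (Delta (m a b)) [seq (m p.1 q.1, m p.2 q.2) | p <- ta, q <- tb]),
      teq2 (Delta u) [:: (u, u)],
      (forall a b, A a -> A b -> e (m a b) = e a * e b) &
      e u = 1] /\
  (forall k a b, A a -> A b -> s (k *: a + b) = k *: s a + s b) /\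
  (forall a t, A a -> Arep A Delta a t ->
     \sum_(p <- t) m (s p.1) p.2 = e a *: u /\
     \sum_(p <- t) m p.1 (s p.2) = e a *: u).

Definition cocommutative_on (A : H -> Prop) (Delta : H -> seq (H * H)) : Prop :=
  forall a, A a -> teq2 (Delta a) [seq (p.2, p.1) | p <- Delta a].

Definition cocomm_hopf_on A m u Delta e s : Prop :=
  hopf_on A m u Delta e s /\ cocommutative_on A Delta.

End Hopf.

Section RBS.
Variables (F : fieldType) (H : algType F).
Variables (Delta : H -> seq (H * H)) (eps : H -> F) (S : H -> H).

Definition coalg_hom (B : H -> H) : Prop :=
  [/\ linear_map B,
      (forall a, teq2 (Delta (B a)) [seq (B p.1, B p.2) | p <- Delta a]) &
      (forall a, eps (B a) = eps a)].

Definition desc_op (B1 B2 : H -> H) (a b : H) : H :=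
  \sum_(p <- Delta a) B1 p.1 * b * S (B2 p.2).

Definition cocycle (B1 B2 : H -> H) (a : H) : H :=
  \sum_(p <- Delta a) B1 p.1 * S (B2 p.2).

Definition rb_system (B1 B2 : H -> H) : Prop :=
  [/\ cocomm_hopf_on (fun _ => True) *%R 1 Delta eps S,
      coalg_hom B1, coalg_hom B2, B1 1 = 1 /\ B2 1 = 1 &
      forall a b, B1 a * B1 b = B1 (desc_op B1 B2 a b) /\
                  B2 a * B2 b = B2 (desc_op B1 B2 a b)].

Definition T_map (B1 B2 : H -> H) (a : H) : H :=
  \sum_(p <- Delta a) S (B1 p.1) * B2 p.2.

End RBS.

(* Main.v *)
Require Import Defs.
From HB Require Import structures.
From mathcomp Require Import all_boot all_order all_algebra.
From mathcomp Require Import boolp classical_sets.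
Set Implicit Arguments. Unset Strict Implicit. Unset Printing Implicit Defensive.
Import Order.TTheory GRing.Theory Num.Theory.
Local Open Scope ring_scope.


Section Sep.
Local Open Scope classical_set_scope.
Variables (F : fieldType) (V : lmodType F).
Definition linF (f : V -> F) := forall k x y, f (k *: x + y) = k * f x + f y.

Definition goodG (G : set (V * F)) :=
  (forall y a b, G (y,a) -> G (y,b) -> a = b) /\
  (forall k y z a b, G (y,a) -> G (z,b) -> G (k*:y+z, k*a+b)).

Lemma sep_exists (x : V) : x != 0 -> exists f, linF f /\ f x = 1.
Proof.
move=> x0.
pose R0 : set (V * F) := [set p | exists c, p = (c *: x, c)].
pose P : set (set (V * F)) := fun A => goodG (A `|` R0).
have gR0 : goodG R0.
  split.
    move=> y a b [c [-> ->]] [d [e ->]].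
    apply/eqP; rewrite -subr_eq0; apply/eqP.
    have : (c - d) *: x == 0 by rewrite scalerBl e subrr.
    by rewrite scaler_eq0 (negbTE x0) orbF => /eqP.
  move=> k y z a b [c [-> ->]] [d [-> ->]].
  by exists (k * c + d); rewrite scalerDl scalerA.
have PR : forall A, P A -> forall p, R0 p -> (A `|` R0) p by move=> A _ p ?; right.
have [A [PA Amax]] : exists A, P A /\ forall B, A `<` B -> ~ P B.
  apply: Zorn_bigcup => FF FP Ftot.
  set U := \bigcup_(X in FF) X.
  have two : forall p q, (U `|` R0) p -> (U `|` R0) q ->
      exists X, goodG (X `|` R0) /\ X `<=` U /\ (X `|` R0) p /\ (X `|` R0) q.
    move=> p q [[X1 FX1 X1p]|R0p] [[X2 FX2 X2q]|R0q].
    - have [X12|X21] := Ftot _ _ FX1 FX2.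
        exists X2; split; first exact: FP.
        split; first by move=> r X2r; exists X2.
        by split; left => //; apply: X12.
      exists X1; split; first exact: FP.
      split; first by move=> r X1r; exists X1.
      by split; left => //; apply: X21.
    - exists X1; split; first exact: FP.
      by split; [move=> r X1r; exists X1|split; [left|right]].
    - exists X2; split; first exact: FP.
      by split; [move=> r X2r; exists X2|split; [right|left]].
    - exists set0; split; first by rewrite set0U.
      by split; [move=> r []|split; right].
  split.
    move=> y a b Hp Hq.
    have [X [[gX _] [_ [Xp Xq]]]] := two _ _ Hp Hq.
    exact: gX Xp Xq.
  move=> k y z a b Hp Hq.
  have [X [[_ gX] [XU [Xp Xq]]]] := two _ _ Hp Hq.
  case: (gX k y z a b Xp Xq) => [Xr|Rr]; [left; exact: XU|by right].
set M := A `|` R0.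
have [Mf Mc] : goodG M by [].
have M00 : M (0, 0).
  have Mx : M (x, 1) by right; exists 1; rewrite scale1r.
  have := Mc (-1) _ _ _ _ Mx Mx.
  by rewrite scaleN1r addNr mulN1r addNr.
have Mtot : forall v, exists a, M (v, a).
  move=> v; apply/not_existsP => Nv.
  pose E : set (V * F) := [set p | exists y a c, M (y,a) /\ p = (y + c *: v, a)].
  have ME : M `<=` E by move=> [y a] My; exists y, a, 0; rewrite scale0r addr0.
  apply: (Amax E).
    split; first by move=> p Ap; apply: ME; left.
    move=> EA.
    have : E (v, 0) by exists 0, 0, 1; rewrite scale1r add0r.
    move=> /EA Av; apply: (Nv 0); by left.
  have gE : goodG E.
    split.
      move=> w a b [y [a' [c [My [-> ->]]]]] [y' [b' [c' [My' [Heq ->]]]]].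
      have [cc|cc] := eqVneq c c'.
        subst c'; move/addIr: Heq => Hy; subst y'; exact: Mf My My'.
      exfalso; apply: (Nv ((c - c')^-1 * (b' - a'))).
      have Hv : v = (c - c')^-1 *: (y' - y).
        apply: (scalerI (a := c - c')); first by rewrite subr_eq0.
        rewrite scalerA mulfV ?subr_eq0 // scale1r scalerBl.
        have -> : y' = y + c *: v - c' *: v by rewrite Heq addrK.
        by rewrite [RHS]addrC !addrA addNr add0r.
      have := Mc (-1) _ _ _ _ My My'.
      rewrite scaleN1r mulN1r addrC [-a' + _]addrC => H1.
      have := Mc ((c - c')^-1) _ _ _ _ H1 M00.
      by rewrite addr0 -Hv addr0.
    move=> k w1 w2 a b [y [a' [c [My [-> ->]]]]] [y' [b' [c' [My' [-> ->]]]]].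
    exists (k *: y + y'), (k * a' + b'), (k * c + c'); split; first exact: Mc.
    by congr (_, _); rewrite scalerDr scalerDl scalerA addrACA.
  rewrite /P; have -> : E `|` R0 = E.
    apply/seteqP; split=> p; last by left.
    by case=> // Rp; apply: ME; right.
  exact: gE.
pose f v := projT1 (cid (Mtot v)).
have fP v : M (v, f v) := projT2 (cid (Mtot v)).
exists f; split.
  move=> k y z; apply: Mf (fP _) _.
  exact: Mc (fP y) (fP z).
apply: Mf (fP _) _; right; exists 1; by rewrite scale1r.
Qed.

End Sep.


Section Lin.
Variable (F : fieldType).

Definition lin (U V : lmodType F) (g : U -> V) :=
  forall k x y, g (k *: x + y) = k *: g x + g y.

Section LinProps.
Variables (U V : lmodType F) (g : U -> V) (hg : lin g).
Lemma lin0 : g 0 = 0.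
Proof. by have := hg 1 0 0; rewrite !scale1r addr0 => /(congr1 (fun z => z - g 0)); rewrite addrK subrr => <-. Qed.
Lemma linD x y : g (x + y) = g x + g y.
Proof. by have := hg 1 x y; rewrite !scale1r. Qed.
Lemma linZ k x : g (k *: x) = k *: g x.
Proof. by rewrite -[k *: x]addr0 hg lin0 addr0. Qed.
Lemma linN x : g (- x) = - g x.
Proof. by rewrite -scaleN1r linZ scaleN1r. Qed.
Lemma linB x y : g (x - y) = g x - g y.
Proof. by rewrite linD linN. Qed.
Lemma lin_sum (I : Type) (s : seq I) (h : I -> U) :
  g (\sum_(i <- s) h i) = \sum_(i <- s) g (h i).
Proof.
elim: s => [|i s IH]; first by rewrite !big_nil lin0.
by rewrite !big_cons linD IH.
Qed.
End LinProps.

Lemma sep_eq (V : lmodType F) (x y : V) :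
  (forall f : V -> F^o, lin f -> f x = f y) -> x = y.
Proof.
move=> Hf; apply/eqP; rewrite -subr_eq0; apply/negPn/negP => ne.
have [f [lf f1]] := sep_exists ne.
have lf' : lin (f : V -> F^o) by move=> k a b; rewrite lf.
have e := Hf _ lf'; move: f1; rewrite (linB lf') e subrr.
by move=> /eqP; rewrite eq_sym oner_eq0.
Qed.

End Lin.


Section Sw.
Variables (F : fieldType) (H : algType F).
Variables (Delta : H -> seq (H * H)) (eps : H -> F) (S : H -> H).

Hypothesis hDlin : forall k a b,
  teq2 (Delta (k *: a + b)) ([seq (k *: p.1, p.2) | p <- Delta a] ++ Delta b).
Hypothesis heps_lin : forall k a b, eps (k *: a + b) = k * eps a + eps b.
Hypothesis hcoass : forall a psi, trilinear_form psi ->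
  \sum_(p <- Delta a) \sum_(q <- Delta p.1) psi q.1 q.2 p.2 =
  \sum_(p <- Delta a) \sum_(q <- Delta p.2) psi p.1 q.1 q.2.
Hypothesis hcounit : forall a,
  \sum_(p <- Delta a) eps p.1 *: p.2 = a /\ \sum_(p <- Delta a) eps p.2 *: p.1 = a.
Hypothesis hmul : forall a b,
  teq2 (Delta (a * b)) [seq (p.1 * q.1, p.2 * q.2) | p <- Delta a, q <- Delta b].
Hypothesis hD1 : teq2 (Delta 1) [:: (1, 1)].
Hypothesis heps_mul : forall a b, eps (a * b) = eps a * eps b.
Hypothesis heps1 : eps 1 = 1.
Hypothesis hSlin : forall k a b, S (k *: a + b) = k *: S a + S b.
Hypothesis hanti : forall a,
  \sum_(p <- Delta a) S p.1 * p.2 = eps a *: 1 /\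
  \sum_(p <- Delta a) p.1 * S p.2 = eps a *: 1.
Hypothesis hcc : forall a, teq2 (Delta a) [seq (p.2, p.1) | p <- Delta a].

Definition sw (V : lmodType F) (a : H) (G : H -> H -> V) : V :=
  \sum_(p <- Delta a) G p.1 p.2.
Definition bil (V : lmodType F) (G : H -> H -> V) :=
  (forall y, lin (fun x => G x y)) /\ (forall x, lin (fun y => G x y)).
Definition tri (V : lmodType F) (K : H -> H -> H -> V) :=
  [/\ (forall y z, lin (fun x => K x y z)), (forall x z, lin (fun y => K x y z)) &
      (forall x y, lin (fun z => K x y z))].

Lemma teqV (V : lmodType F) s t (G : H -> H -> V) : teq2 s t -> bil G ->
  \sum_(p <- s) G p.1 p.2 = \sum_(p <- t) G p.1 p.2.
Proof.
move=> st [G1 G2]; apply: (@sep_eq F V) => f lf.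
rewrite !(lin_sum lf).
apply: (st (fun x y => f (G x y))); split.
- by move=> k x x' y; rewrite G1 (linD lf) (linZ lf).
- by move=> k x y y'; rewrite G2 (linD lf) (linZ lf).
Qed.

Lemma eq_sw (V : lmodType F) a (G G' : H -> H -> V) :
  (forall x y, G x y = G' x y) -> sw a G = sw a G'.
Proof. by move=> e; apply: eq_bigr => p _; rewrite e. Qed.

Lemma sw_pull (V W : lmodType F) (g : V -> W) a (G : H -> H -> V) :
  lin g -> g (sw a G) = sw a (fun x y => g (G x y)).
Proof. by move=> lg; rewrite /sw (lin_sum lg). Qed.

Lemma sw_exch (V : lmodType F) a b (K : H -> H -> H -> H -> V) :
  sw a (fun x y => sw b (fun u v => K x y u v)) =
  sw b (fun u v => sw a (fun x y => K x y u v)).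
Proof. by rewrite /sw; apply: exchange_big. Qed.

Lemma lin_sw (V : lmodType F) (G : H -> H -> V) : bil G -> lin (fun a => sw a G).
Proof.
move=> [G1 G2] k a b; rewrite /sw (teqV (hDlin k a b)); last by split.
rewrite big_cat big_map /=.
congr (_ + _); rewrite scaler_sumr; apply: eq_bigr => p _.
by rewrite (linZ (G1 _)).
Qed.

Lemma sw_cc (V : lmodType F) a (G : H -> H -> V) : bil G ->
  sw a G = sw a (fun x y => G y x).
Proof. by move=> bG; rewrite /sw (teqV (hcc a)) // big_map. Qed.

Lemma sw_coass (V : lmodType F) a (K : H -> H -> H -> V) : tri K ->
  sw a (fun x y => sw x (fun u v => K u v y)) =
  sw a (fun x y => sw y (fun u v => K x u v)).
Proof.
move=> [K1 K2 K3]; apply: (@sep_eq F V) => f lf.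
rewrite !(sw_pull _ _ lf) /sw.
under eq_bigr do rewrite (lin_sum lf).
under [RHS]eq_bigr do rewrite (lin_sum lf).
have tf : trilinear_form (fun x y z => f (K x y z) : F).
  split; [|split].
  - by move=> k x x' y z; rewrite K1 (linD lf) (linZ lf).
  - by move=> k x y y' z; rewrite K2 (linD lf) (linZ lf).
  - by move=> k x y z z'; rewrite K3 (linD lf) (linZ lf).
exact: (hcoass a tf).
Qed.

Lemma sw_epsl (V : lmodType F) a (g : H -> V) : lin g ->
  sw a (fun x y => eps x *: g y) = g a.
Proof.
move=> lg; rewrite -[in RHS](hcounit a).1 (lin_sum lg).
by apply: eq_bigr => p _; rewrite (linZ lg).
Qed.

Lemma sw_epsr (V : lmodType F) a (g : H -> V) : lin g ->
  sw a (fun x y => eps y *: g x) = g a.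
Proof.
move=> lg; rewrite -[in RHS](hcounit a).2 (lin_sum lg).
by apply: eq_bigr => p _; rewrite (linZ lg).
Qed.

Lemma sw_mul (V : lmodType F) a b (G : H -> H -> V) : bil G ->
  sw (a * b) G = sw a (fun x y => sw b (fun u v => G (x * u) (y * v))).
Proof. by move=> bG; rewrite /sw (teqV (hmul a b)) // big_allpairs_dep. Qed.

Lemma sw1 (V : lmodType F) (G : H -> H -> V) : bil G -> sw 1 G = G 1 1.
Proof. by move=> bG; rewrite /sw (teqV hD1) // big_seq1. Qed.

Lemma sw_antil (V : lmodType F) a (g : H -> V) : lin g ->
  sw a (fun x y => g (S x * y)) = eps a *: g 1.
Proof. by move=> lg; rewrite -(sw_pull _ _ lg) /sw (hanti a).1 (linZ lg). Qed.

Lemma sw_antir (V : lmodType F) a (g : H -> V) : lin g ->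
  sw a (fun x y => g (x * S y)) = eps a *: g 1.
Proof. by move=> lg; rewrite -(sw_pull _ _ lg) /sw (hanti a).2 (linZ lg). Qed.

Lemma lS : lin S. Proof. exact: hSlin. Qed.
Lemma leps : lin (eps : H -> F^o). Proof. by move=> k x y; rewrite heps_lin. Qed.

Lemma lin_id (U : lmodType F) : lin (fun x : U => x). Proof. by []. Qed.
Lemma lin_comp (U V W : lmodType F) (g : V -> W) (h : U -> V) :
  lin g -> lin h -> lin (fun x => g (h x)).
Proof. by move=> lg lh k x y; rewrite lh lg. Qed.
Lemma lin_mull (U : lmodType F) (h : U -> H) c : lin h -> lin (fun x => h x * c).
Proof. by move=> lh k x y; rewrite lh mulrDl scalerAl. Qed.
Lemma lin_mulr (U : lmodType F) (h : U -> H) c : lin h -> lin (fun x => c * h x).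
Proof. by move=> lh k x y; rewrite lh mulrDr scalerAr. Qed.
Lemma lin_Zl (U V : lmodType F) (h : U -> F^o) (c : V) :
  lin h -> lin (fun x => h x *: c).
Proof. by move=> lh k x y; rewrite lh scalerDl scalerA. Qed.
Lemma lin_Zr (U V : lmodType F) (h : U -> V) k0 : lin h -> lin (fun x => k0 *: h x).
Proof. by move=> lh k x y; rewrite lh scalerDr !scalerA mulrC. Qed.
Lemma lin_add (U V : lmodType F) (h1 h2 : U -> V) :
  lin h1 -> lin h2 -> lin (fun x => h1 x + h2 x).
Proof. by move=> l1 l2 k x y; rewrite l1 l2 scalerDr addrACA. Qed.
Lemma lin_sw1 (U V : lmodType F) (h : U -> H) (G : H -> H -> V) :
  bil G -> lin h -> lin (fun x => sw (h x) G).
Proof. by move=> bG lh; apply: lin_comp (lin_sw bG) lh. Qed.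
Lemma lin_sw2 (U V : lmodType F) a (K : H -> H -> U -> V) :
  (forall u v, lin (fun x => K u v x)) -> lin (fun x => sw a (fun u v => K u v x)).
Proof.
move=> lK k x y; rewrite /sw scaler_sumr -big_split /=.
by apply: eq_bigr => p _; rewrite lK.
Qed.
Lemma lin_bil1 (U V : lmodType F) (G : H -> H -> V) (h : U -> H) c :
  bil G -> lin h -> lin (fun x => G (h x) c).
Proof. by move=> [G1 _] lh; apply: (lin_comp (G1 c) lh). Qed.
Lemma lin_bil2 (U V : lmodType F) (G : H -> H -> V) (h : U -> H) c :
  bil G -> lin h -> lin (fun x => G c (h x)).
Proof. by move=> [_ G2] lh; apply: (lin_comp (G2 c) lh). Qed.


Definition ml4 (V : lmodType F) (K : H -> H -> H -> H -> V) :=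
  [/\ (forall b c d, lin (fun a => K a b c d)), (forall a c d, lin (fun b => K a b c d)),
      (forall a b d, lin (fun c => K a b c d)) & (forall a b c, lin (fun d => K a b c d))].
Definition sw4 (V : lmodType F) y (K : H -> H -> H -> H -> V) :=
  sw y (fun c d => sw c (fun c1 c2 => sw d (fun d1 d2 => K c1 c2 d1 d2))).

Ltac lin_extra := fail.
Ltac lin_step :=
  match goal with
  | |- bil _ => split; intro
  | |- tri _ => split; intros
  | |- ml4 _ => split; intros
  | |- forall _, _ => intro
  | |- lin (fun x => x) => apply: lin_id
  | |- lin (GRing.mul _) => apply: (lin_mulr _ (@lin_id _))
  | |- lin (fun _ => _ * _) => first [apply: lin_mull | apply: lin_mulr]
  | |- lin (fun _ => _ *: _) => first [apply: lin_Zl | apply: lin_Zr]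
  | |- lin (fun _ => _ + _) => apply: lin_add
  | |- lin (fun _ => sw _ _) => first [apply: lin_sw2 | apply: lin_sw1]
  | |- lin _ => first [ lin_extra | assumption | exact: lS | exact: leps
        | (eapply lin_comp; [solve [eassumption | exact: lS | exact: leps] |])
        | (eapply lin_bil1; [eassumption|]) | (eapply lin_bil2; [eassumption|]) ]
  end.
Ltac lin_tac := repeat lin_step.

Variables B1 B2 : H -> H.
Hypothesis hB1lin : lin B1.
Hypothesis hB2lin : lin B2.
Hypothesis hB1D : forall a, teq2 (Delta (B1 a)) [seq (B1 p.1, B1 p.2) | p <- Delta a].
Hypothesis hB2D : forall a, teq2 (Delta (B2 a)) [seq (B2 p.1, B2 p.2) | p <- Delta a].
Hypothesis hB1e : forall a, eps (B1 a) = eps a.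
Hypothesis hB2e : forall a, eps (B2 a) = eps a.
Hypothesis hB11 : B1 1 = 1.
Hypothesis hB21 : B2 1 = 1.
Hypothesis hRB1 : forall a b, B1 a * B1 b = B1 (desc_op Delta S B1 B2 a b).
Hypothesis hRB2 : forall a b, B2 a * B2 b = B2 (desc_op Delta S B1 B2 a b).

Definition desc a b := sw a (fun x y => B1 x * b * S (B2 y)).
Definition sig a := sw a (fun x y => B1 x * S (B2 y)).
Definition Tm a := sw a (fun x y => S (B1 x) * B2 y).

Lemma RB1 a b : B1 a * B1 b = B1 (desc a b). Proof. exact: hRB1. Qed.
Lemma RB2 a b : B2 a * B2 b = B2 (desc a b). Proof. exact: hRB2. Qed.

Lemma sw_B1 (V : lmodType F) a (G : H -> H -> V) : bil G ->
  sw (B1 a) G = sw a (fun x y => G (B1 x) (B1 y)).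
Proof. by move=> bG; rewrite /sw (teqV (hB1D a)) // big_map. Qed.
Lemma sw_B2 (V : lmodType F) a (G : H -> H -> V) : bil G ->
  sw (B2 a) G = sw a (fun x y => G (B2 x) (B2 y)).
Proof. by move=> bG; rewrite /sw (teqV (hB2D a)) // big_map. Qed.

Lemma S1 : S 1 = 1.
Proof.
have := sw_antil 1 (@lin_id H).
by rewrite sw1 ?heps1 ?scale1r ?mulr1 //; lin_tac.
Qed.

Lemma sw_mulr c a (G : H -> H -> H) : c * sw a G = sw a (fun x y => c * G x y).
Proof. by rewrite /sw mulr_sumr. Qed.
Lemma sw_mull c a (G : H -> H -> H) : sw a G * c = sw a (fun x y => G x y * c).
Proof. by rewrite /sw mulr_suml. Qed.
Lemma sw_scale (V : lmodType F) k a (G : H -> H -> V) :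
  k *: sw a G = sw a (fun x y => k *: G x y).
Proof. by rewrite /sw scaler_sumr. Qed.

Lemma sw_antil' (V : lmodType F) a (G : H -> H -> V) (g : H -> V) : lin g ->
  (forall x y, G x y = g (S x * y)) -> sw a G = eps a *: g 1.
Proof. by move=> lg e; rewrite (eq_sw _ e) sw_antil. Qed.
Lemma sw_antir' (V : lmodType F) a (G : H -> H -> V) (g : H -> V) : lin g ->
  (forall x y, G x y = g (x * S y)) -> sw a G = eps a *: g 1.
Proof. by move=> lg e; rewrite (eq_sw _ e) sw_antir. Qed.
Lemma sw_epsl' (V : lmodType F) a (G : H -> H -> V) (g : H -> V) : lin g ->
  (forall x y, G x y = eps x *: g y) -> sw a G = g a.
Proof. by move=> lg e; rewrite (eq_sw _ e) sw_epsl. Qed.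
Lemma sw_epsr' (V : lmodType F) a (G : H -> H -> V) (g : H -> V) : lin g ->
  (forall x y, G x y = eps y *: g x) -> sw a G = g a.
Proof. by move=> lg e; rewrite (eq_sw _ e) sw_epsr. Qed.

Ltac sweq := repeat (apply: eq_sw => ? ?).
Ltac side := first [by move=> * | solve [lin_tac] | by move=> * /=; sweq; rewrite ?mul1r ?mulr1 !mulrA].

Lemma Santi a b : S (a * b) = S b * S a.
Proof.
rewrite -[S b](sw_epsr b lS) -[S a](sw_epsr a lS).
rewrite sw_mull.
under eq_sw => u v do rewrite sw_mulr.
rewrite sw_exch.
transitivity (sw a (fun x y => sw b (fun u v =>
   sw y (fun y1 y2 => sw v (fun v1 v2 => S u * S x * (y1 * v1 * S (y2 * v2))))))); last first.
  apply: eq_sw => x y; apply: eq_sw => u v.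
  under eq_sw => y1 y2 do rewrite -sw_mulr.
  rewrite -sw_mulr.
  have E := sw_antir (y * v) (@lin_id H).
  rewrite sw_mul /= in E; last by lin_tac.
  rewrite E heps_mul -!scalerAl -!scalerAr scalerA mulr1 mulrC.
  done.
under eq_sw => x y do rewrite sw_exch.
rewrite -sw_coass; last by lin_tac.
under eq_sw => e y2.
  rewrite (@sw_antil' _ e _ (fun z => sw b (fun x0 w => sw w (fun v1 v2 => S x0 * (z * v1 * S (y2 * v2)))))); 
    [over | lin_tac | by move=> * /=; sweq; rewrite !mulrA].
rewrite (@sw_epsl' _ a _ (fun y2 => sw b (fun x0 w => sw w (fun v1 v2 => S x0 * (1 * v1 * S (y2 * v2)))))) /=;
  [|side|side].
rewrite -sw_coass; last by lin_tac.
under eq_sw => e v2.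
  rewrite (@sw_antil' _ e _ (fun z => z * S (a * v2)));
    [over | lin_tac | by move=> * /=; rewrite mul1r mulrA].
rewrite (@sw_epsl' _ b _ (fun v2 => 1 * S (a * v2))) /=; [|side|side].
by rewrite mul1r.
Qed.

Lemma epsS a : eps (S a) = eps a.
Proof.
rewrite -[in LHS](sw_epsr a (@lin_id H)) (sw_pull _ _ lS) /=.
rewrite (sw_pull _ _ leps) /=.
rewrite (@sw_antil' _ a _ (eps : H -> F^o)) ?leps //.
  by rewrite heps1; exact: mulr1.
move=> x y /=; rewrite (linZ lS) (linZ leps) heps_mul /=.
by rewrite mulrC.
Qed.

Lemma sw_mul' (V : lmodType F) a b (K : H -> H -> H -> H -> V) (G : H -> H -> V) :
  bil G -> (forall p q c1 c2, K p q c1 c2 = G (p * c1) (q * c2)) ->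
  sw a (fun p q => sw b (fun c1 c2 => K p q c1 c2)) = sw (a * b) G.
Proof. by move=> bG e; rewrite sw_mul //; sweq; rewrite e. Qed.

Definition R4 (V : lmodType F) y (K : H -> H -> H -> H -> V) :=
  sw y (fun c1 z => sw z (fun w d2 => sw w (fun c2 d1 => K c1 c2 d1 d2))).

Lemma sw4_R (V : lmodType F) y (K : H -> H -> H -> H -> V) : ml4 K -> sw4 y K = R4 y K.
Proof.
case=> K1 K2 K3 K4.
rewrite /sw4 (sw_coass y (K := fun c1 c2 d => sw d (fun d1 d2 => K c1 c2 d1 d2))); last by lin_tac.
rewrite /R4; apply: eq_sw => c1 z.
by rewrite -(sw_coass z (K := fun c2 d1 d2 => K c1 c2 d1 d2)) //; lin_tac.
Qed.

Lemma sw4_23 (V : lmodType F) y (K : H -> H -> H -> H -> V) : ml4 K ->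
  sw4 y K = sw4 y (fun c1 c2 d1 d2 => K c1 d1 c2 d2).
Proof.
move=> mK; have mK' : ml4 (fun c1 c2 d1 d2 => K c1 d1 c2 d2).
  by case: mK => K1 K2 K3 K4; split.
rewrite !sw4_R //; rewrite /R4; apply: eq_sw => c1 z; apply: eq_sw => w d2.
by rewrite sw_cc //; case: mK => K1 K2 K3 K4; lin_tac.
Qed.

Lemma sw4_12 (V : lmodType F) y (K : H -> H -> H -> H -> V) : ml4 K ->
  sw4 y K = sw4 y (fun c1 c2 d1 d2 => K c2 c1 d1 d2).
Proof.
case=> K1 K2 K3 K4; rewrite /sw4; apply: eq_sw => c d.
by rewrite sw_cc //; lin_tac.
Qed.

Lemma sw4_34 (V : lmodType F) y (K : H -> H -> H -> H -> V) : ml4 K ->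
  sw4 y K = sw4 y (fun c1 c2 d1 d2 => K c1 c2 d2 d1).
Proof.
case=> K1 K2 K3 K4; rewrite /sw4; apply: eq_sw => c d; apply: eq_sw => c1 c2.
by rewrite sw_cc //; lin_tac.
Qed.

Lemma sw4_1324 (V : lmodType F) y (K : H -> H -> H -> H -> V) : ml4 K ->
  sw4 y K = sw4 y (fun c1 c2 d1 d2 => K d1 d2 c1 c2).
Proof.
case=> K1 K2 K3 K4; rewrite /sw4 sw_cc; last by lin_tac.
by apply: eq_sw => c d; rewrite sw_exch.
Qed.

Lemma epsG (V : lmodType F) y (G : H -> H -> V) p q : bil G ->
  eps y *: G p q = sw4 y (fun c1 c2 d1 d2 => G (p * (c1 * S c2)) (q * (d1 * S d2))).
Proof.
move=> bG; symmetry; rewrite /sw4.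
transitivity (sw y (fun c d => eps d *: (eps c *: G p q))); last first.
  by rewrite (@sw_epsr' _ y _ (fun c => eps c *: G p q)) //; lin_tac.
apply: eq_sw => c d.
under eq_sw => c1 c2.
  rewrite (@sw_antir' _ d _ (fun z => G (p * (c1 * S c2)) (q * z))); [over|lin_tac|by []].
rewrite (@sw_antir' _ c _ (fun z => eps d *: G (p * z) (q * 1))); [|lin_tac|by []].
by rewrite !mulr1 !scalerA mulrC.
Qed.

Lemma SD (V : lmodType F) a (G : H -> H -> V) : bil G ->
  sw (S a) G = sw a (fun x y => G (S x) (S y)).
Proof.
move=> bG.
rewrite -[in LHS](sw_epsr a (@lin_id H)) /=.
have := sw_pull a (fun x y => eps y *: x) (lin_comp (lin_sw bG) lS); move=> /= ->.
under eq_sw => x y do rewrite (linZ lS) (linZ (lin_sw bG)) sw_scale.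
under eq_sw => x y do under eq_sw => p q do rewrite (epsG _ _ _ bG).
under eq_sw => x y do under eq_sw => p q do [rewrite sw4_23; last by lin_tac].
rewrite /sw4.
under eq_sw => x y do rewrite sw_exch.
under eq_sw => x y.
  under eq_sw => c d.
    rewrite (@sw_mul' _ (S x) c _ (fun u v => sw d (fun d1 d2 => G (u * S d1) (v * S d2))));
      [over|lin_tac|by move=> *; sweq; rewrite !mulrA].
  over.
rewrite -(sw_coass a (K := fun x c d => sw (S x * c) (fun u v => sw d (fun d1 d2 => G (u * S d1) (v * S d2))))); last by lin_tac.
under eq_sw => e d.
  rewrite (@sw_antil' _ e _ (fun z => sw z (fun u v => sw d (fun d1 d2 => G (u * S d1) (v * S d2)))));
    [over|lin_tac|by []].
rewrite (@sw_epsl' _ a _ (fun d => sw 1 (fun u v => sw d (fun d1 d2 => G (u * S d1) (v * S d2))))) /=;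
  [|lin_tac|by []].
rewrite sw1; last by lin_tac.
by sweq; rewrite !mul1r.
Qed.

Lemma anti0l a : sw a (fun x y => S x * y) = eps a *: 1. Proof. exact: (hanti a).1. Qed.
Lemma anti0r a : sw a (fun x y => x * S y) = eps a *: 1. Proof. exact: (hanti a).2. Qed.

Lemma SS a : S (S a) = a.
Proof.
transitivity (sw a (fun x y => sw y (fun y1 y2 => S (S x) * (S y1 * y2)))).
  rewrite -[in LHS](sw_epsr a (@lin_id H)) /=.
  have := sw_pull a (fun x y => eps y *: x) (lin_comp lS lS); move=> /= ->.
  apply: eq_sw => x y; rewrite -sw_mulr anti0l -scalerAr mulr1.
  by rewrite !(linZ lS).
rewrite -(sw_coass a (K := fun x y1 y2 => S (S x) * (S y1 * y2))); last by lin_tac.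
under eq_sw => e y2.
  under eq_sw => x y1 do rewrite mulrA -Santi.
  rewrite sw_cc; last by lin_tac.
  rewrite (@sw_antir' _ e _ (fun z => S z * y2)); [over|lin_tac|by []].
rewrite (@sw_epsl' _ a _ (fun y2 => S 1 * y2)) /=; [|lin_tac|by []].
by rewrite S1 mul1r.
Qed.

Definition coh (f : H -> H) :=
  [/\ lin f, (forall (V : lmodType F) a (G : H -> H -> V), bil G ->
                sw (f a) G = sw a (fun x y => G (f x) (f y))) &
      forall a, eps (f a) = eps a].

Lemma cohB1 : coh B1. Proof. by split=> // V a G; apply: sw_B1. Qed.
Lemma cohB2 : coh B2. Proof. by split=> // V a G; apply: sw_B2. Qed.
Lemma cohS : coh S. Proof. split; [exact: lS|exact: SD|exact: epsS]. Qed.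
Lemma coh_comp f g : coh f -> coh g -> coh (fun x => f (g x)).
Proof.
case=> lf Df ef [lg Dg eg]; split.
- exact: lin_comp.
- by move=> V a G bG; rewrite Df // Dg //; lin_tac.
- by move=> a; rewrite ef eg.
Qed.

Lemma sw_bil1 (V : lmodType F) (G : H -> H -> V) a X c : bil G ->
  G (sw a X) c = sw a (fun p q => G (X p q) c).
Proof. by case=> G1 _; rewrite (sw_pull _ _ (G1 c)). Qed.
Lemma sw_bil2 (V : lmodType F) (G : H -> H -> V) a X c : bil G ->
  G c (sw a X) = sw a (fun p q => G c (X p q)).
Proof. by case=> _ G2; rewrite (sw_pull _ _ (G2 c)). Qed.

Lemma Dprod f g y a (V : lmodType F) (G : H -> H -> V) : coh f -> coh g -> bil G ->
  sw (sw a (fun p q => f p * y * g q)) G =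
  sw a (fun a1 a2 => sw y (fun y1 y2 =>
     G (sw a1 (fun p q => f p * y1 * g q)) (sw a2 (fun p q => f p * y2 * g q)))).
Proof.
move=> [lf Df ef] [lg Dg eg] bG.
have := sw_pull a (fun p q => f p * y * g q) (lin_sw bG); move=> /= ->.
transitivity (sw4 a (fun p1 p2 q1 q2 => sw y (fun y1 y2 => G (f p1 * y1 * g q1) (f p2 * y2 * g q2)))).
  rewrite /sw4; apply: eq_sw => p q.
  rewrite sw_mul; last by lin_tac.
  rewrite sw_mul; last by lin_tac.
  rewrite Df; last by lin_tac.
  apply: eq_sw => p1 p2.
  rewrite [RHS]sw_exch; apply: eq_sw => y1 y2.
  by rewrite Dg //; lin_tac.
rewrite sw4_23; last by lin_tac.
rewrite /sw4; apply: eq_sw => a1 a2.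
under [RHS]eq_sw => y1 y2 do rewrite sw_bil1 //.
under [RHS]eq_sw => y1 y2 do under eq_sw => p q do rewrite sw_bil2 //.
rewrite [RHS]sw_exch; apply: eq_sw => p q.
by rewrite [RHS]sw_exch.
Qed.

Lemma eps_prod f g y a : coh f -> coh g ->
  eps (sw a (fun p q => f p * y * g q)) = eps a * eps y.
Proof.
move=> [lf Df ef] [lg Dg eg].
rewrite (sw_pull _ _ leps) /=.
under eq_sw => p q do rewrite !heps_mul ef eg.
rewrite (@sw_epsr' _ a _ (fun p => (eps p * eps y : F^o))) //.
  by move=> k u v; rewrite /= heps_lin mulrDl -mulrA.
by move=> p q; exact: (mulrC (eps p * eps y) (eps q)).
Qed.

Lemma cohSB1 : coh (fun x => S (B1 x)). Proof. exact: coh_comp cohS cohB1. Qed.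
Lemma cohSB2 : coh (fun x => S (B2 x)). Proof. exact: coh_comp cohS cohB2. Qed.

Lemma Ddesc a b (V : lmodType F) (G : H -> H -> V) : bil G ->
  sw (desc a b) G = sw a (fun a1 a2 => sw b (fun b1 b2 => G (desc a1 b1) (desc a2 b2))).
Proof. move=> bG; exact: (Dprod b a cohB1 cohSB2 bG). Qed.

Lemma eps_desc a b : eps (desc a b) = eps a * eps b.
Proof. exact: (eps_prod b a cohB1 cohSB2). Qed.

Lemma lin_desc1 b : lin (fun a => desc a b).
Proof. rewrite /desc; lin_tac. Qed.
Lemma lin_desc2 a : lin (fun b => desc a b).
Proof. rewrite /desc; lin_tac. Qed.
Lemma lin_sig : lin sig.
Proof. rewrite /sig; lin_tac. Qed.
Lemma lin_Tm : lin Tm.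
Proof. rewrite /Tm; lin_tac. Qed.

Lemma lin_descA (U : lmodType F) (h : U -> H) b : lin h -> lin (fun x => desc (h x) b).
Proof. by move=> lh; apply: (lin_comp (lin_desc1 b) lh). Qed.
Lemma lin_descB (U : lmodType F) (h : U -> H) a : lin h -> lin (fun x => desc a (h x)).
Proof. by move=> lh; apply: (lin_comp (lin_desc2 a) lh). Qed.
Lemma lin_sigA (U : lmodType F) (h : U -> H) : lin h -> lin (fun x => sig (h x)).
Proof. by move=> lh; apply: (lin_comp lin_sig lh). Qed.
Lemma lin_TmA (U : lmodType F) (h : U -> H) : lin h -> lin (fun x => Tm (h x)).
Proof. by move=> lh; apply: (lin_comp lin_Tm lh). Qed.

Ltac lin_extra ::= first [ apply: lin_descA | apply: lin_descB | apply: lin_sigA | apply: lin_TmA ].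

Lemma sig_desc a : sig a = desc a 1.
Proof. by rewrite /sig /desc; sweq; rewrite mulr1. Qed.

Lemma Dsig a (V : lmodType F) (G : H -> H -> V) : bil G ->
  sw (sig a) G = sw a (fun x y => G (sig x) (sig y)).
Proof.
move=> bG; rewrite sig_desc Ddesc //; apply: eq_sw => x y.
by rewrite sw1 ?sig_desc //; lin_tac.
Qed.

Lemma Tm_prod a : Tm a = sw a (fun p q => S (B1 p) * 1 * B2 q).
Proof. by rewrite /Tm; sweq; rewrite mulr1. Qed.

Lemma DT a (V : lmodType F) (G : H -> H -> V) : bil G ->
  sw (Tm a) G = sw a (fun x y => G (Tm x) (Tm y)).
Proof.
move=> bG; rewrite Tm_prod (Dprod 1 a cohSB1 cohB2 bG); apply: eq_sw => x y.
by rewrite sw1 ?Tm_prod //; lin_tac.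
Qed.

Lemma eps_Tm a : eps (Tm a) = eps a.
Proof. by rewrite Tm_prod (eps_prod 1 a cohSB1 cohB2) heps1 mulr1. Qed.

Lemma eps_sig a : eps (sig a) = eps a.
Proof. by rewrite sig_desc eps_desc heps1 mulr1. Qed.

Lemma desc_assoc x y z : desc (desc x y) z = desc x (desc y z).
Proof.
rewrite {1}/desc Ddesc; last by lin_tac.
rewrite {2}/desc; apply: eq_sw => x1 x2.
rewrite sw_mulr sw_mull; apply: eq_sw => y1 y2.
by rewrite -RB1 -RB2 Santi !mulrA.
Qed.

Lemma desc1a a : desc 1 a = a.
Proof. by rewrite /desc sw1 ?hB11 ?hB21 ?S1 ?mulr1 ?mul1r //; lin_tac. Qed.

Lemma sig_sig a : sig (sig a) = sig a.
Proof. by rewrite !sig_desc desc_assoc desc1a. Qed.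

Lemma sig_closed a b : desc (sig a) (sig b) = sig (desc (sig a) b).
Proof. by rewrite [sig b]sig_desc -desc_assoc -sig_desc. Qed.

Lemma B1sig u : B1 (sig u) = B1 u.
Proof. by rewrite sig_desc -RB1 hB11 mulr1. Qed.
Lemma B2sig u : B2 (sig u) = B2 u.
Proof. by rewrite sig_desc -RB2 hB21 mulr1. Qed.

Lemma B1anti f : sw f (fun c d => B1 c * S (B1 d)) = eps f *: 1.
Proof. by rewrite -(sw_B1 f (G := fun u v => u * S v)) ?anti0r ?hB1e //; lin_tac. Qed.
Lemma B2anti f : sw f (fun c d => B2 c * S (B2 d)) = eps f *: 1.
Proof. by rewrite -(sw_B2 f (G := fun u v => u * S v)) ?anti0r ?hB2e //; lin_tac. Qed.
Lemma B1antil f : sw f (fun c d => S (B1 c) * B1 d) = eps f *: 1.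
Proof. by rewrite -(sw_B1 f (G := fun u v => S u * v)) ?anti0l ?hB1e //; lin_tac. Qed.
Lemma B2antil f : sw f (fun c d => S (B2 c) * B2 d) = eps f *: 1.
Proof. by rewrite -(sw_B2 f (G := fun u v => S u * v)) ?anti0l ?hB2e //; lin_tac. Qed.

Lemma contract4 x (X Y : H -> H -> H) :
  (forall f, sw f X = eps f *: 1) -> (forall f, sw f Y = eps f *: 1) ->
  sw4 x (fun a b c d => X a b * Y c d) = eps x *: 1.
Proof.
move=> hX hY; rewrite /sw4.
under eq_sw => e f.
  under eq_sw => a b do rewrite -sw_mulr hY -scalerAr mulr1.
  rewrite -sw_scale hX.
  over.
by rewrite (@sw_epsr' _ x _ (fun e => eps e *: 1)) //; lin_tac.
Qed.

Lemma xTx x : sw x (fun p q => desc p (Tm q)) = eps x *: 1.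
Proof.
transitivity (sw4 x (fun l1 l2 l3 l4 => B1 l1 * (S (B1 l3) * B2 l4) * S (B2 l2))).
  rewrite /sw4 /desc; apply: eq_sw => p q; rewrite /Tm.
  by under eq_sw => p1 p2 do rewrite sw_mulr sw_mull.
rewrite sw4_23; last by lin_tac.
rewrite sw4_34 /=; last by lin_tac.
rewrite -(contract4 x (X := fun a b => B1 a * S (B1 b)) (Y := fun c d => B2 c * S (B2 d)));
  [|exact: B1anti|exact: B2anti].
by sweq; rewrite !mulrA.
Qed.

Lemma B1T z : B1 (Tm z) = S (B1 z).
Proof.
transitivity (sw z (fun a b => sw b (fun c d => S (B1 a) * (B1 c * B1 (Tm d))))); last first.
  rewrite -[RHS](sw_epsr z (lin_comp lS hB1lin)).
  apply: eq_sw => a b.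
  under eq_sw => c d do rewrite RB1.
  rewrite -sw_mulr -(sw_pull _ _ hB1lin) xTx (linZ hB1lin) hB11.
  by rewrite -scalerAr mulr1.
rewrite -(sw_coass z (K := fun a c d => S (B1 a) * (B1 c * B1 (Tm d)))); last by lin_tac.
under eq_sw => e d.
  under eq_sw => a c do rewrite mulrA.
  rewrite -sw_mull B1antil -scalerAl mul1r.
  over.
by rewrite (@sw_epsl' _ z _ (fun d => B1 (Tm d))) //; lin_tac.
Qed.

Lemma B2T z : B2 (Tm z) = S (B2 z).
Proof.
transitivity (sw z (fun a b => sw b (fun c d => S (B2 a) * (B2 c * B2 (Tm d))))); last first.
  rewrite -[RHS](sw_epsr z (lin_comp lS hB2lin)).
  apply: eq_sw => a b.
  under eq_sw => c d do rewrite RB2.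
  rewrite -sw_mulr -(sw_pull _ _ hB2lin) xTx (linZ hB2lin) hB21.
  by rewrite -scalerAr mulr1.
rewrite -(sw_coass z (K := fun a c d => S (B2 a) * (B2 c * B2 (Tm d)))); last by lin_tac.
under eq_sw => e d.
  under eq_sw => a c do rewrite mulrA.
  rewrite -sw_mull B2antil -scalerAl mul1r.
  over.
by rewrite (@sw_epsl' _ z _ (fun d => B2 (Tm d))) //; lin_tac.
Qed.

Lemma sigT x : sig (Tm x) = Tm x.
Proof.
rewrite /sig DT; last by lin_tac.
by rewrite /Tm; sweq; rewrite B1T B2T SS.
Qed.

Lemma Txx w : sw (sig w) (fun p q => desc (Tm p) q) = eps (sig w) *: 1.
Proof.
rewrite eps_sig Dsig; last by lin_tac.
transitivity (sw4 w (fun u v c d => S (B1 u) * (B1 c * S (B2 d)) * B2 v)).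
  rewrite /sw4; apply: eq_sw => a b.
  rewrite {1}/desc DT; last by lin_tac.
  rewrite Dsig; last by lin_tac.
  apply: eq_sw => u v.
  rewrite B1T B2T SS B1sig B2sig /sig.
  by rewrite sw_mulr sw_mull.
rewrite sw4_23; last by lin_tac.
rewrite sw4_34 /=; last by lin_tac.
rewrite -(contract4 w (X := fun a b => S (B1 a) * B1 b) (Y := fun c d => S (B2 c) * B2 d));
  [|exact: B1antil|exact: B2antil].
by sweq; rewrite !mulrA.
Qed.

Lemma teq2_sym (s t : seq (H * H)) : teq2 s t -> teq2 t s.
Proof. by move=> st phi bp; rewrite st. Qed.

Lemma bil_form (phi : H -> H -> F) : bilinear_form phi -> bil (phi : H -> H -> F^o).
Proof. by case=> p1 p2; split=> z k x y; rewrite ?p1 ?p2. Qed.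

Lemma sw_rep (V : lmodType F) a t (G : H -> H -> V) : teq2 t (Delta a) -> bil G ->
  sw a G = \sum_(p <- t) G p.1 p.2.
Proof. by move=> ta bG; rewrite /sw (teqV (teq2_sym ta)). Qed.

Hypothesis hraw : cocomm_hopf_on (fun _ => True) *%R 1 Delta eps S.

Lemma main_in :
  cocomm_hopf_on (fun x : H => exists a, x = cocycle Delta S B1 B2 a)
    (desc_op Delta S B1 B2) 1 Delta eps (T_map Delta S B1 B2).
Proof.
change (cocomm_hopf_on (fun x => exists a, x = sig a) desc 1 Delta eps Tm).
case: hraw => [[_ [_ [_ [[_ _ hcoa hcou] [[_ hD1' _ _] _]]]]] hcom].
split; last by move=> a _; apply: hcom.
split; [|split; [|split; [|split; [|split; [|split]]]]].
- split.
  + by exists 0; rewrite (lin0 lin_sig).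
  + by move=> k _ _ [a ->] [b ->]; exists (k *: a + b); rewrite lin_sig.
  + by exists 1; rewrite sig_desc desc1a.
  + by move=> _ _ [a ->] [b ->]; exists (desc (sig a) b); rewrite sig_closed.
  + by move=> _ [a ->]; exists (Tm (sig a)); rewrite sigT.
- move=> _ [w ->]; exists [seq (sig p.1, sig p.2) | p <- Delta w]; split.
    by move=> p /mapP [q _ ->]; split; [exists q.1|exists q.2].
  move=> phi /bil_form bp; rewrite big_map.
  have := Dsig w bp; rewrite /sw => ->.
  by [].
- split.
  + by move=> k a a' b _ _ _; rewrite (lin_desc1 b).
  + by move=> k a b b' _ _ _; rewrite (lin_desc2 a).
  + by move=> a b c _ _ _; rewrite desc_assoc.
  + move=> a [w ->]; split; first exact: desc1a.
    by rewrite -sig_desc sig_sig.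
- split.
  + by move=> k a b _ _; apply: hDlin.
  + by move=> k a b _ _; apply: heps_lin.
  + move=> a t _ [_ ta]; apply: (hcoa a t I); split; [by move=> *|exact: ta].
  + move=> a t _ [_ ta]; apply: (hcou a t I); split; [by move=> *|exact: ta].
- split.
  + move=> a b ta tb _ _ [_ ha] [_ hb] phi /bil_form bp.
    rewrite big_allpairs_dep /=.
    have := Ddesc a b bp; rewrite {1}/sw => ->.
    rewrite (sw_rep ha); last by lin_tac.
    apply: eq_bigr => p _.
    by rewrite (sw_rep hb) //; lin_tac.
  + exact: hD1'.
  + by move=> a b _ _; rewrite eps_desc.
  + exact: heps1.
- by move=> k a b _ _; rewrite lin_Tm.
- move=> a t [w ->] [_ ta]; split.
  + rewrite -(@sw_rep _ _ t (fun x y => desc (Tm x) y) ta); last by lin_tac.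
    exact: Txx.
  + rewrite -(@sw_rep _ _ t (fun x y => desc x (Tm y)) ta); last by lin_tac.
    exact: xTx.
Qed.

End Sw.


Theorem mainTheorem1 (F : fieldType) (H : algType F)
    (Delta : H -> seq (H * H)) (eps : H -> F) (S : H -> H) (B1 B2 : H -> H) :
  [pchar F] =i pred0 ->
  rb_system Delta eps S B1 B2 ->
  cocomm_hopf_on (fun x : H => exists a, x = cocycle Delta S B1 B2 a)
    (desc_op Delta S B1 B2) 1 Delta eps (T_map Delta S B1 B2).
Proof.
move=> _ hrb; case: (hrb) => hh [lB1 DB1 eB1] [lB2 DB2 eB2] [h11 h21] hRB.
have hh' := hh.
case: hh' => [[_ [_ [_ [[hDl hel hcoa hcou] [[hDm hD1 hem he1] [hSl hant]]]]]] hcom].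
have rep a : Arep (fun _ : H => True) Delta a (Delta a).
  by split => // p _.
exact: (@main_in F H Delta eps S
  (fun k a b => hDl k a b I I) (fun k a b => hel k a b I I)
  (fun a psi tp => hcoa a (Delta a) I (rep a) psi tp)
  (fun a => hcou a (Delta a) I (rep a))
  (fun a b => hDm a b (Delta a) (Delta b) I I (rep a) (rep b))
  hD1 (fun a b => hem a b I I) he1 (fun k a b => hSl k a b I I)
  (fun a => hant a (Delta a) I (rep a)) (fun a => hcom a I)
  B1 B2 lB1 lB2 DB1 DB2 eB1 eB2 h11 h21
  (fun a b => (hRB a b).1) (fun a b => (hRB a b).2) hh).
Qed.
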